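(* Let $\mathbf{x}:[-1,1]^2\to\mathbb{R}^2$, $\mathbf{x}(\xi,\eta)=(x(\xi,\eta),y(\xi,\eta))$, be a sufficiently smooth ($C^2$) map whose Jacobian $\mathbf{J}=\begin{bmatrix} x_\xi & x_\eta\\ y_\xi & y_\eta\end{bmatrix}$ is nonsingular everywhere on $[-1,1]^2$. Let $F(-1,\cdot)$ and $F(\cdot,-1)$ be given differentiable functions on $[-1,1]$ (transformed Dirichlet data on the edges $\xi=-1$ and $\eta=-1$) agreeing at the corner $(-1,-1)$, and let $u_{nBC}$, $u_{nCD}$ be given differentiable Neumann data on the images of the edges $\xi=1$ and $\eta=1$. Define $S_{BC},T_{BC},S_{CD},T_{CD}$, the flags $\lambda_B,\lambda_C,\lambda_D$, the corner quantities, the polynomials $\rho_0,\rho_1,\upsilon_0,\upsilon_1,\omega_1$ and the operators $Pg$, $PF^g$ as in the context. Assume the compatibility conditions: if $\lambda_B=0$ then $F_\xi(1,-1)=T_{BC}(-1)$; if $\lambda_D=0$ then $F_\eta(-1,1)=T_{CD}(-1)$; if $\lambda_C=0$ then $T_{CD}'(1)-S_{CD}'(1)F^a_\xi(1,1)=T_{BC}'(1)-S_{BC}'(1)F^a_\eta(1,1)$. Then for every sufficiently differentiable $g:[-1,1]^2\to\mathbb{R}$, the function $V=g-Pg+PF^g$ satisfies, for all $\xi,\eta\in[-1,1]$, $V(-1,\eta)=F(-1,\eta)$, $V(\xi,-1)=F(\xi,-1)$, $$V_\xi(1,\eta)+S_{BC}(\eta)V_\eta(1,\eta)=T_{BC}(\eta),\qquad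 V_\eta(\xi,1)+S_{CD}(\xi)V_\xi(\xi,1)=T_{CD}(\xi).$$
   Context: Setting: a curved quadrilateral $ABCD$ is the image of $[-1,1]^2$ under $\mathbf{x}$, with $A=\mathbf{x}(-1,-1)$, $B=\mathbf{x}(1,-1)$, $C=\mathbf{x}(1,1)$, $D=\mathbf{x}(-1,1)$; edges $AB:\eta=-1$, $BC:\xi=1$, $CD:\eta=1$, $AD:\xi=-1$. A field $u$ is represented as $V(\xi,\eta)=u(\mathbf{x}(\xi,\eta))$; Dirichlet conditions on $AB$, $AD$ and Neumann conditions $\mathbf n\cdot\nabla u=u_{nBC}$ on $BC$ and $\mathbf n\cdot\nabla u=u_{nCD}$ on $CD$ become the stated conditions on $V$. Notation: $F(1,-1):=F(\xi,-1)|_{\xi=1}$, $F(-1,1):=F(-1,\eta)|_{\eta=1}$, $F(-1,-1)$ the common corner value, $F_\xi(1,-1):=\frac{d}{d\xi}F(\xi,-1)|_{\xi=1}$, $F_\eta(-1,1):=\frac{d}{d\eta}F(-1,\eta)|_{\eta=1}$. Edge coefficients: $S_{BC}(\eta)=-\frac{\mathbf{x}_\xi(1,\eta)\cdot\mathbf{x}_\eta(1,\eta)}{\|\mathbf{x}_\eta(1,\eta)\|^2}$ (equivalently $K_{yBC}/K_{xBC}$ with $K_{xBC}=\|\mathbf{x}_\eta(1,\eta)\|/\det\mathbf{J}(1,\eta)$, $K_{yBC}=-\mathbf{x}_\xi(1,\eta)\cdot\mathbf{x}_\eta(1,\eta)/(\|\mathbf{x}_\eta(1,\eta)\|\det\mathbf{J}(1,\eta))$),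 $T_{BC}(\eta)=u_{nBC}(\mathbf{x}(1,\eta))/K_{xBC}(\eta)$; $K_{xCD}(\xi)=-\frac{\mathbf{x}_\xi(\xi,1)\cdot\mathbf{x}_\eta(\xi,1)}{\|\mathbf{x}_\xi(\xi,1)\|\det\mathbf{J}(\xi,1)}$, $K_{yCD}(\xi)=\frac{\|\mathbf{x}_\xi(\xi,1)\|}{\det\mathbf{J}(\xi,1)}$, $S_{CD}=K_{xCD}/K_{yCD}$, $T_{CD}(\xi)=u_{nCD}(\mathbf{x}(\xi,1))/K_{yCD}(\xi)$. Flags: $\lambda_B=0$ if $\mathbf{x}_\xi(1,-1)\cdot\mathbf{x}_\eta(1,-1)=0$, else $1$; $\lambda_C=0$ if $\mathbf{x}_\xi(1,1)\cdot\mathbf{x}_\eta(1,1)=0$, else $1$; $\lambda_D=0$ if $\mathbf{x}_\xi(-1,1)\cdot\mathbf{x}_\eta(-1,1)=0$, else $1$. Any term multiplied by a flag equal to $0$ is taken to be $0$ (so quantities only defined when the flag is $1$ are never needed otherwise). Corner quantities: $F^a_\eta(1,-1)=\frac{T_{BC}(-1)-F_\xi(1,-1)}{S_{BC}(-1)}$ (if $\lambda_B=1$); $F^a_\xi(-1,1)=\frac{T_{CD}(-1)-F_\eta(-1,1)}{S_{CD}(-1)}$ (if $\lambda_D=1$); $F^a_\xi(1,1)=\frac{T_{BC}(1)-S_{BC}(1)T_{CD}(1)}{1-S_{BC}(1)S_{CD}(1)}$, $F^a_\eta(1,1)=\frac{T_{CD}(1)-S_{CD}(1)T_{BC}(1)}{1-S_{BC}(1)S_{CD}(1)}$;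 $R_C=[T_{CD}'(1)-S_{CD}'(1)F^a_\xi(1,1)]-[T_{BC}'(1)-S_{BC}'(1)F^a_\eta(1,1)]$; $F^g_{\xi\xi}(1,1)=\frac{S_{BC}(1)}{S_{CD}(1)}g_{\eta\eta}(1,1)+\frac{R_C}{S_{CD}(1)}$ (if $\lambda_C=1$); $F^g_{\xi\eta}(1,1)=T_{BC}'(1)-S_{BC}'(1)F^a_\eta(1,1)-S_{BC}(1)g_{\eta\eta}(1,1)$. Polynomials with $\phi_0(t)=\tfrac12(1-t)$, $\phi_1(t)=\tfrac12(1+t)$: $\rho_0=\phi_0^3(1+3\phi_1+6\phi_1^2)$, $\rho_1=\phi_1^3(1+3\phi_0+6\phi_0^2)$, $\upsilon_0=2\phi_0^3\phi_1(1+3\phi_1)$, $\upsilon_1=-2\phi_1^3\phi_0(1+3\phi_0)$, $\omega_1=2\phi_1^3\phi_0^2$. $F^g_\xi(1,\eta)=T_{BC}(\eta)-S_{BC}(\eta)\{g_\eta(1,\eta)-[g(1,-1)-F(1,-1)]\rho_0'(\eta)-[g_\eta(1,1)-F^a_\eta(1,1)]\upsilon_1'(\eta)-\lambda_B[g_\eta(1,-1)-F^a_\eta(1,-1)]\upsilon_0'(\eta)\}$; $F^g_\eta(\xi,1)=T_{CD}(\xi)-S_{CD}(\xi)\{g_\xi(\xi,1)-[g(-1,1)-F(-1,1)]\rho_0'(\xi)-[g_\xi(1,1)-F^a_\xi(1,1)]\upsilon_1'(\xi)-\lambda_D[g_\xi(-1,1)-F^a_\xi(-1,1)]\upsilon_0'(\xi)-\lambda_C[g_{\xi\xi}(1,1)-F^g_{\xi\xi}(1,1)]\omega_1'(\xi)\}$.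 $Pg(\xi,\eta)=g(-1,\eta)\rho_0(\xi)+g_\xi(1,\eta)\upsilon_1(\xi)+g(\xi,-1)\rho_0(\eta)+g_\eta(\xi,1)\upsilon_1(\eta)-[g(-1,-1)\rho_0(\eta)+g_\eta(-1,1)\upsilon_1(\eta)]\rho_0(\xi)-[g_\xi(1,-1)\rho_0(\eta)+g_{\xi\eta}(1,1)\upsilon_1(\eta)]\upsilon_1(\xi)+\lambda_Bg_\eta(1,-1)\upsilon_0(\eta)\rho_1(\xi)+[\lambda_Dg_\xi(-1,1)\upsilon_0(\xi)+\lambda_Cg_{\xi\xi}(1,1)\omega_1(\xi)]\rho_1(\eta)$. $PF^g(\xi,\eta)=F(-1,\eta)\rho_0(\xi)+F^g_\xi(1,\eta)\upsilon_1(\xi)+F(\xi,-1)\rho_0(\eta)+F^g_\eta(\xi,1)\upsilon_1(\eta)-[F(-1,-1)\rho_0(\eta)+F_\eta(-1,1)\upsilon_1(\eta)]\rho_0(\xi)-[F_\xi(1,-1)\rho_0(\eta)+F^g_{\xi\eta}(1,1)\upsilon_1(\eta)]\upsilon_1(\xi)+\lambda_BF^a_\eta(1,-1)\upsilon_0(\eta)\rho_1(\xi)+[\lambda_DF^a_\xi(-1,1)\upsilon_0(\xi)+\lambda_CF^g_{\xi\xi}(1,1)\omega_1(\xi)]\rho_1(\eta)$. *)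

(* Defs.v *)
From Stdlib Require Import Reals.
From Coquelicot Require Import Coquelicot.
Open Scope R_scope.

Definition pd1 (f : R -> R -> R) (s t : R) : R := Derive (fun s' => f s' t) s.
Definition pd2 (f : R -> R -> R) (s t : R) : R := Derive (fun t' => f s t') t.

Definition C2 (f : R -> R -> R) : Prop :=
  forall s t,
    ex_derive (fun s' => f s' t) s /\ ex_derive (fun t' => f s t') t /\
    ex_derive (fun s' => pd1 f s' t) s /\ ex_derive (fun t' => pd1 f s t') t /\
    ex_derive (fun s' => pd2 f s' t) s /\ ex_derive (fun t' => pd2 f s t') t /\
    continuity_2d_pt f s t /\
    continuity_2d_pt (pd1 f) s t /\ continuity_2d_pt (pd2 f) s t /\
    continuity_2d_pt (pd1 (pd1 f)) s t /\ continuity_2d_pt (pd2 (pd1 f)) s t /\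
    continuity_2d_pt (pd1 (pd2 f)) s t /\ continuity_2d_pt (pd2 (pd2 f)) s t.

Definition phi0 (t : R) : R := (1 - t) / 2.
Definition phi1 (t : R) : R := (1 + t) / 2.
Definition rho0 (t : R) : R := phi0 t ^ 3 * (1 + 3 * phi1 t + 6 * phi1 t ^ 2).
Definition rho1 (t : R) : R := phi1 t ^ 3 * (1 + 3 * phi0 t + 6 * phi0 t ^ 2).
Definition ups0 (t : R) : R := 2 * phi0 t ^ 3 * phi1 t * (1 + 3 * phi1 t).
Definition ups1 (t : R) : R := - 2 * phi1 t ^ 3 * phi0 t * (1 + 3 * phi0 t).
Definition omg1 (t : R) : R := 2 * phi1 t ^ 3 * phi0 t ^ 2.

Section Construction.
Variables xm ym : R -> R -> R.
(* Dirichlet data: Fl eta = F(-1,eta), Fb xi = F(xi,-1) *)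
Variables Fl Fb : R -> R.
(* Neumann data, functions of a point (X,Y) of the plane *)
Variables unBC unCD : R -> R -> R.

Definition detJ (s t : R) : R := pd1 xm s t * pd2 ym s t - pd2 xm s t * pd1 ym s t.
Definition dotJ (s t : R) : R := pd1 xm s t * pd2 xm s t + pd1 ym s t * pd2 ym s t.
Definition nxi2 (s t : R) : R := pd1 xm s t ^ 2 + pd1 ym s t ^ 2.
Definition neta2 (s t : R) : R := pd2 xm s t ^ 2 + pd2 ym s t ^ 2.

Definition S_BC (eta : R) : R := - dotJ 1 eta / neta2 1 eta.
Definition KxBC (eta : R) : R := sqrt (neta2 1 eta) / detJ 1 eta.
Definition T_BC (eta : R) : R := unBC (xm 1 eta) (ym 1 eta) / KxBC eta.
Definition KxCD (xi : R) : R := - dotJ xi 1 / (sqrt (nxi2 xi 1) * detJ xi 1).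
Definition KyCD (xi : R) : R := sqrt (nxi2 xi 1) / detJ xi 1.
Definition S_CD (xi : R) : R := KxCD xi / KyCD xi.
Definition T_CD (xi : R) : R := unCD (xm xi 1) (ym xi 1) / KyCD xi.

Definition flag (a : R) : R := if Req_dec_T a 0 then 0 else 1.
Definition lamB : R := flag (dotJ 1 (-1)).
Definition lamC : R := flag (dotJ 1 1).
Definition lamD : R := flag (dotJ (-1) 1).

Definition FaEta_B : R := (T_BC (-1) - Derive Fb 1) / S_BC (-1).
Definition FaXi_D : R := (T_CD (-1) - Derive Fl 1) / S_CD (-1).
Definition FaXi_C : R :=
  (T_BC 1 - S_BC 1 * T_CD 1) / (1 - S_BC 1 * S_CD 1).
Definition FaEta_C : R :=
  (T_CD 1 - S_CD 1 * T_BC 1) / (1 - S_BC 1 * S_CD 1).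
Definition R_C : R :=
  (Derive T_CD 1 - Derive S_CD 1 * FaXi_C) - (Derive T_BC 1 - Derive S_BC 1 * FaEta_C).

Variable g : R -> R -> R.

Definition Fg_xixi_C : R := S_BC 1 / S_CD 1 * pd2 (pd2 g) 1 1 + R_C / S_CD 1.
Definition Fg_xieta_C : R := Derive T_BC 1 - Derive S_BC 1 * FaEta_C - S_BC 1 * pd2 (pd2 g) 1 1.

Definition Fg_xi_BC (eta : R) : R :=
  T_BC eta - S_BC eta *
   (pd2 g 1 eta - (g 1 (-1) - Fb 1) * Derive rho0 eta
    - (pd2 g 1 1 - FaEta_C) * Derive ups1 eta
    - lamB * (pd2 g 1 (-1) - FaEta_B) * Derive ups0 eta).

Definition Fg_eta_CD (xi : R) : R :=
  T_CD xi - S_CD xi *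
   (pd1 g xi 1 - (g (-1) 1 - Fl 1) * Derive rho0 xi
    - (pd1 g 1 1 - FaXi_C) * Derive ups1 xi
    - lamD * (pd1 g (-1) 1 - FaXi_D) * Derive ups0 xi
    - lamC * (pd1 (pd1 g) 1 1 - Fg_xixi_C) * Derive omg1 xi).

Definition Pg (xi eta : R) : R :=
  g (-1) eta * rho0 xi + pd1 g 1 eta * ups1 xi + g xi (-1) * rho0 eta + pd2 g xi 1 * ups1 eta
  - (g (-1) (-1) * rho0 eta + pd2 g (-1) 1 * ups1 eta) * rho0 xi
  - (pd1 g 1 (-1) * rho0 eta + pd2 (pd1 g) 1 1 * ups1 eta) * ups1 xi
  + lamB * pd2 g 1 (-1) * ups0 eta * rho1 xi
  + (lamD * pd1 g (-1) 1 * ups0 xi + lamC * pd1 (pd1 g) 1 1 * omg1 xi) * rho1 eta.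

Definition PFg (xi eta : R) : R :=
  Fl eta * rho0 xi + Fg_xi_BC eta * ups1 xi + Fb xi * rho0 eta + Fg_eta_CD xi * ups1 eta
  - (Fl (-1) * rho0 eta + Derive Fl 1 * ups1 eta) * rho0 xi
  - (Derive Fb 1 * rho0 eta + Fg_xieta_C * ups1 eta) * ups1 xi
  + lamB * FaEta_B * ups0 eta * rho1 xi
  + (lamD * FaXi_D * ups0 xi + lamC * Fg_xixi_C * omg1 xi) * rho1 eta.

Definition V (xi eta : R) : R := g xi eta - Pg xi eta + PFg xi eta.

End Construction.

(* Main.v *)
Require Import Defs.
From Stdlib Require Import Reals Lra FunctionalExtensionality.
From Coquelicot Require Import Coquelicot.
Open Scope R_scope.

Definition rho0d t := -3/2*phi0 t^2*(1+3*phi1 t+6*phi1 t^2) + phi0 t^3*(3/2 + 6*phi1 t).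
Definition ups0d t := 2*(3*phi0 t^2*(-1/2))*phi1 t*(1+3*phi1 t) + 2*phi0 t^3*(1/2)*(1+3*phi1 t)
   + 2*phi0 t^3*phi1 t*(3/2).
Definition ups1d t := -2*(3/2*phi1 t^2)*phi0 t*(1+3*phi0 t) - 2*phi1 t^3*(-1/2)*(1+3*phi0 t)
   - 2*phi1 t^3*phi0 t*(-3/2).
Definition omg1d t := 2*(3/2*phi1 t^2)*phi0 t^2 + 2*phi1 t^3*(2*phi0 t*(-1/2)).

Lemma Drho0 : Derive rho0 = rho0d.
Proof. apply functional_extensionality; intro t. apply is_derive_unique.
unfold rho0, rho0d, phi0, phi1. auto_derive; [easy| field]. Qed.
Lemma Dups0 : Derive ups0 = ups0d.
Proof. apply functional_extensionality; intro t. apply is_derive_unique.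
unfold ups0, ups0d, phi0, phi1. auto_derive; [easy| field]. Qed.
Lemma Dups1 : Derive ups1 = ups1d.
Proof. apply functional_extensionality; intro t. apply is_derive_unique.
unfold ups1, ups1d, phi0, phi1. auto_derive; [easy| field]. Qed.
Lemma Domg1 : Derive omg1 = omg1d.
Proof. apply functional_extensionality; intro t. apply is_derive_unique.
unfold omg1, omg1d, phi0, phi1. auto_derive; [easy| field]. Qed.

Ltac solve_c2 := match goal with
| H : C2 ?f |- ex_derive (fun x => ?f x ?t) ?s => exact (proj1 (H s t))
| H : C2 ?f |- ex_derive (fun x => ?f ?s x) ?t => exact (proj1 (proj2 (H s t)))
| H : C2 ?f |- ex_derive (fun x => pd1 ?f x ?t) ?s => exact (proj1 (proj2 (proj2 (H s t))))
| H : C2 ?f |- ex_derive (fun x => pd1 ?f ?s x) ?t => exact (proj1 (proj2 (proj2 (proj2 (H s t)))))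
| H : C2 ?f |- ex_derive (fun x => pd2 ?f x ?t) ?s => exact (proj1 (proj2 (proj2 (proj2 (proj2 (H s t))))))
| H : C2 ?f |- ex_derive (fun x => pd2 ?f ?s x) ?t => exact (proj1 (proj2 (proj2 (proj2 (proj2 (proj2 (H s t)))))))
end.

Ltac eta_norm := repeat match goal with |- context [Derive (fun x => ?f x) ?p] =>
  change (Derive (fun x => f x) p) with (Derive f p) end.

Lemma exd_div_sqrt (u p q : R -> R) s : ex_derive u s -> ex_derive p s -> ex_derive q s ->
  0 < p s -> q s <> 0 -> ex_derive (fun s => u s / (sqrt (p s) / q s)) s.
Proof. intros. auto_derive. repeat split; auto.
assert (0 < sqrt (p s)) by (apply sqrt_lt_R0; auto).
unfold Rdiv. apply Rmult_integral_contrapositive_currified; [lra| apply Rinv_neq_0_compat; auto].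
Qed.

Lemma exd_SCD (a p q : R -> R) s : ex_derive a s -> ex_derive p s -> ex_derive q s ->
  0 < p s -> q s <> 0 ->
  ex_derive (fun s => (- a s / (sqrt (p s) * q s)) / (sqrt (p s) / q s)) s.
Proof. intros. assert (0 < sqrt (p s)) by (apply sqrt_lt_R0; auto).
auto_derive. repeat split; auto.
- apply Rmult_integral_contrapositive_currified; auto; lra.
- unfold Rdiv. apply Rmult_integral_contrapositive_currified; [lra| apply Rinv_neq_0_compat; auto].
Qed.

Lemma exd_quot (a p : R -> R) s : ex_derive a s -> ex_derive p s -> p s <> 0 ->
  ex_derive (fun s => - a s / p s) s.
Proof. intros. auto_derive. repeat split; auto. Qed.

Lemma lagrange xm ym s t : nxi2 xm ym s t * neta2 xm ym s t - dotJ xm ym s t ^ 2 = detJ xm ym s t ^ 2.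
Proof. unfold nxi2, neta2, dotJ, detJ. ring. Qed.

Lemma nxi2_pos xm ym s t : detJ xm ym s t <> 0 -> 0 < nxi2 xm ym s t.
Proof. intro H. assert (H1 := Rsqr_pos_lt _ H). unfold Rsqr in H1.
pose proof (lagrange xm ym s t) as L.
assert (0 <= neta2 xm ym s t) by (unfold neta2; nra).
assert (0 <= nxi2 xm ym s t) by (unfold nxi2; nra).
destruct (Rle_lt_or_eq_dec _ _ H2) as [h|h]; auto.
rewrite <- h in L. nra. Qed.

Lemma neta2_pos xm ym s t : detJ xm ym s t <> 0 -> 0 < neta2 xm ym s t.
Proof. intro H. assert (H1 := Rsqr_pos_lt _ H). unfold Rsqr in H1.
pose proof (lagrange xm ym s t) as L.
assert (0 <= neta2 xm ym s t) by (unfold neta2; nra).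
assert (0 <= nxi2 xm ym s t) by (unfold nxi2; nra).
destruct (Rle_lt_or_eq_dec _ _ H0) as [h|h]; auto.
rewrite <- h in L. nra. Qed.

Lemma S_CD_eq xm ym s : detJ xm ym s 1 <> 0 -> S_CD xm ym s = - dotJ xm ym s 1 / nxi2 xm ym s 1.
Proof. intro H. pose proof (nxi2_pos _ _ _ _ H) as P.
assert (Q := sqrt_lt_R0 _ P). assert (E := sqrt_sqrt _ (Rlt_le _ _ P)).
unfold S_CD, KxCD, KyCD. rewrite <- E at 3. field. split; lra. Qed.

Lemma den_C xm ym : detJ xm ym 1 1 <> 0 -> 1 - S_BC xm ym 1 * S_CD xm ym 1 <> 0.
Proof. intro H. rewrite S_CD_eq by auto. unfold S_BC.
pose proof (nxi2_pos _ _ _ _ H) as P1. pose proof (neta2_pos _ _ _ _ H) as P2.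
pose proof (lagrange xm ym 1 1) as L.
intro E. apply H.
assert (A : nxi2 xm ym 1 1 * neta2 xm ym 1 1 *
   (1 - - dotJ xm ym 1 1 / neta2 xm ym 1 1 * (- dotJ xm ym 1 1 / nxi2 xm ym 1 1))
   = detJ xm ym 1 1 ^ 2) by (rewrite <- L; field; lra).
rewrite E, Rmult_0_r in A. destruct (Req_dec (detJ xm ym 1 1) 0) as [h|h]; auto.
exfalso; apply (pow_nonzero _ 2 h); auto. Qed.

Ltac side := repeat split; try solve_c2; auto.

Lemma exd_TCD xm ym unCD (Hx: C2 xm) (Hy : C2 ym) s : detJ xm ym s 1 <> 0 ->
  ex_derive (fun s' => unCD (xm s' 1) (ym s' 1)) s -> ex_derive (T_CD xm ym unCD) s.
Proof. intros. apply (exd_div_sqrt (fun s => unCD (xm s 1) (ym s 1)) (fun s => nxi2 xm ym s 1) (fun s => detJ xm ym s 1)); auto.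
- unfold nxi2; auto_derive; side.
- unfold detJ; auto_derive; side.
- apply nxi2_pos; auto.
Qed.

Lemma exd_SCD' xm ym (Hx: C2 xm) (Hy : C2 ym) s : detJ xm ym s 1 <> 0 ->
  ex_derive (S_CD xm ym) s.
Proof. intros. apply (exd_SCD (fun s => dotJ xm ym s 1) (fun s => nxi2 xm ym s 1) (fun s => detJ xm ym s 1)); auto.
- unfold dotJ; auto_derive; side.
- unfold nxi2; auto_derive; side.
- unfold detJ; auto_derive; side.
- apply nxi2_pos; auto.
Qed.

Lemma exd_TBC xm ym unBC (Hx: C2 xm) (Hy : C2 ym) t : detJ xm ym 1 t <> 0 ->
  ex_derive (fun t' => unBC (xm 1 t') (ym 1 t')) t -> ex_derive (T_BC xm ym unBC) t.
Proof. intros. apply (exd_div_sqrt (fun t => unBC (xm 1 t) (ym 1 t)) (fun t => neta2 xm ym 1 t) (fun t => detJ xm ym 1 t)); auto.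
- unfold neta2; auto_derive; side.
- unfold detJ; auto_derive; side.
- apply neta2_pos; auto.
Qed.

Lemma exd_SBC' xm ym (Hx: C2 xm) (Hy : C2 ym) t : detJ xm ym 1 t <> 0 ->
  ex_derive (S_BC xm ym) t.
Proof. intros. apply (exd_quot (fun t => dotJ xm ym 1 t) (fun t => neta2 xm ym 1 t)); auto.
- unfold dotJ; auto_derive; side.
- unfold neta2; auto_derive; side.
- apply Rgt_not_eq, neta2_pos; auto.
Qed.
Ltac side2 := side; try (match goal with H : forall s, -1 <= s <= 1 -> ex_derive _ s |- ex_derive _ _ => apply H; lra end).

Theorem mainTheorem2
  (xm ym : R -> R -> R) (Fl Fb : R -> R) (unBC unCD : R -> R -> R)
  (Hx : C2 xm) (Hy : C2 ym)
  (HJ : forall s t, -1 <= s <= 1 -> -1 <= t <= 1 -> detJ xm ym s t <> 0)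
  (HFl : forall t, -1 <= t <= 1 -> ex_derive Fl t)
  (HFb : forall s, -1 <= s <= 1 -> ex_derive Fb s)
  (Hcorner : Fl (-1) = Fb (-1))
  (HunBC : forall t, -1 <= t <= 1 -> ex_derive (fun t' => unBC (xm 1 t') (ym 1 t')) t)
  (HunCD : forall s, -1 <= s <= 1 -> ex_derive (fun s' => unCD (xm s' 1) (ym s' 1)) s)
  (HcompB : lamB xm ym = 0 -> Derive Fb 1 = T_BC xm ym unBC (-1))
  (HcompD : lamD xm ym = 0 -> Derive Fl 1 = T_CD xm ym unCD (-1))
  (HcompC : lamC xm ym = 0 ->
     Derive (T_CD xm ym unCD) 1 - Derive (S_CD xm ym) 1 * FaXi_C xm ym unBC unCD
     = Derive (T_BC xm ym unBC) 1 - Derive (S_BC xm ym) 1 * FaEta_C xm ym unBC unCD) :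
  forall g : R -> R -> R, C2 g ->
  let Vg := V xm ym Fl Fb unBC unCD g in
  (forall eta, -1 <= eta <= 1 ->
     Vg (-1) eta = Fl eta /\ Vg eta (-1) = Fb eta) /\
  (forall eta, -1 <= eta <= 1 ->
     ex_derive (fun s => Vg s eta) 1 /\ ex_derive (fun t => Vg 1 t) eta /\
     pd1 Vg 1 eta + S_BC xm ym eta * pd2 Vg 1 eta = T_BC xm ym unBC eta) /\
  (forall xi, -1 <= xi <= 1 ->
     ex_derive (fun t => Vg xi t) 1 /\ ex_derive (fun s => Vg s 1) xi /\
     pd2 Vg xi 1 + S_CD xm ym xi * pd1 Vg xi 1 = T_CD xm ym unCD xi).
Proof.
intros g Hg. cbv zeta.
assert (I1 : -1 <= 1 <= 1) by lra.
assert (Im1 : -1 <= -1 <= 1) by lra.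
assert (HJ11 : detJ xm ym 1 1 <> 0) by (apply HJ; lra).
assert (Hsw : pd2 (pd1 g) 1 1 = pd1 (pd2 g) 1 1).
{ symmetry. apply (Schwarz g 1 1).
  - exists (mkposreal 1 Rlt_0_1). intros u v _ _. destruct (Hg u v) as (h1&h2&h3&h4&h5&_).
    repeat split; auto.
  - exact (proj1 (proj2 (proj2 (proj2 (proj2 (proj2 (proj2 (proj2 (proj2 (proj2 (proj2 (proj2 (Hg 1 1))))))))))))).
  - exact (proj1 (proj2 (proj2 (proj2 (proj2 (proj2 (proj2 (proj2 (proj2 (proj2 (proj2 (Hg 1 1)))))))))))). }
assert (eA1 : Fg_eta_CD xm ym Fl unBC unCD g (-1) = Derive Fl 1).
{ unfold Fg_eta_CD. rewrite Drho0, Dups0, Dups1, Domg1.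
  unfold rho0d, ups0d, ups1d, omg1d, phi0, phi1.
  destruct (Req_dec (dotJ xm ym (-1) 1) 0) as [e|e].
  - assert (L : lamD xm ym = 0) by (unfold lamD, flag; destruct Req_dec_T; [reflexivity|contradiction]).
    assert (S : S_CD xm ym (-1) = 0) by (unfold S_CD, KxCD; rewrite e; unfold Rdiv; ring).
    rewrite L, S, HcompD by auto. ring.
  - assert (L : lamD xm ym = 1) by (unfold lamD, flag; destruct Req_dec_T; [contradiction|reflexivity]).
    assert (S : S_CD xm ym (-1) <> 0).
    { rewrite S_CD_eq by (apply HJ; lra). pose proof (nxi2_pos xm ym (-1) 1 (HJ _ _ Im1 I1)).
      unfold Rdiv. apply Rmult_integral_contrapositive_currified; [lra| apply Rinv_neq_0_compat; lra]. }
    rewrite L. unfold FaXi_D. field. auto. }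
assert (eA2 : Fg_xi_BC xm ym Fb unBC unCD g (-1) = Derive Fb 1).
{ unfold Fg_xi_BC. rewrite Drho0, Dups0, Dups1.
  unfold rho0d, ups0d, ups1d, phi0, phi1.
  destruct (Req_dec (dotJ xm ym 1 (-1)) 0) as [e|e].
  - assert (L : lamB xm ym = 0) by (unfold lamB, flag; destruct Req_dec_T; [reflexivity|contradiction]).
    assert (S : S_BC xm ym (-1) = 0) by (unfold S_BC; rewrite e; unfold Rdiv; ring).
    rewrite L, S, HcompB by auto. ring.
  - assert (L : lamB xm ym = 1) by (unfold lamB, flag; destruct Req_dec_T; [contradiction|reflexivity]).
    assert (S : S_BC xm ym (-1) <> 0).
    { unfold S_BC. pose proof (neta2_pos xm ym 1 (-1) (HJ _ _ I1 Im1)).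
      unfold Rdiv. apply Rmult_integral_contrapositive_currified; [lra| apply Rinv_neq_0_compat; lra]. }
    rewrite L. unfold FaEta_B. field. auto. }
assert (FE : Fg_eta_CD xm ym Fl unBC unCD g = fun s => T_CD xm ym unCD s - S_CD xm ym s *
   (pd1 g s 1 - (g (-1) 1 - Fl 1) * rho0d s - (pd1 g 1 1 - FaXi_C xm ym unBC unCD) * ups1d s
    - lamD xm ym * (pd1 g (-1) 1 - FaXi_D xm ym Fl unCD) * ups0d s
    - lamC xm ym * (pd1 (pd1 g) 1 1 - Fg_xixi_C xm ym unBC unCD g) * omg1d s)).
{ unfold Fg_eta_CD. rewrite Drho0, Dups0, Dups1, Domg1. reflexivity. }
assert (FB : Fg_xi_BC xm ym Fb unBC unCD g = fun t => T_BC xm ym unBC t - S_BC xm ym t *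
   (pd2 g 1 t - (g 1 (-1) - Fb 1) * rho0d t - (pd2 g 1 1 - FaEta_C xm ym unBC unCD) * ups1d t
    - lamB xm ym * (pd2 g 1 (-1) - FaEta_B xm ym Fb unBC) * ups0d t)).
{ unfold Fg_xi_BC. rewrite Drho0, Dups0, Dups1. reflexivity. }
assert (ex1 : forall s, -1 <= s <= 1 -> ex_derive (Fg_eta_CD xm ym Fl unBC unCD g) s).
{ intros s Hs. rewrite FE. unfold rho0d, ups0d, ups1d, omg1d, phi0, phi1. auto_derive. side.
  - apply exd_TCD; auto.
  - apply exd_SCD'; auto. }
assert (ex2 : forall t, -1 <= t <= 1 -> ex_derive (Fg_xi_BC xm ym Fb unBC unCD g) t).
{ intros t Ht. rewrite FB. unfold rho0d, ups0d, ups1d, phi0, phi1. auto_derive. side.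
  - apply exd_TBC; auto.
  - apply exd_SBC'; auto. }
assert (e1 : Fg_eta_CD xm ym Fl unBC unCD g 1 = FaEta_C xm ym unBC unCD).
{ rewrite FE. cbv beta. unfold rho0d, ups0d, ups1d, omg1d, phi0, phi1, FaEta_C, FaXi_C.
  field. apply den_C; auto. }
assert (e1' : Fg_xi_BC xm ym Fb unBC unCD g 1 = FaXi_C xm ym unBC unCD).
{ rewrite FB. cbv beta. unfold rho0d, ups0d, ups1d, phi0, phi1, FaEta_C, FaXi_C.
  field. apply den_C; auto. }
assert (e2' : Derive (Fg_xi_BC xm ym Fb unBC unCD g) 1 = Fg_xieta_C xm ym unBC unCD g).
{ apply is_derive_unique. rewrite FB. unfold rho0d, ups0d, ups1d, phi0, phi1. auto_derive.
  - side. apply exd_TBC; auto. apply exd_SBC'; auto.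
  - unfold Fg_xieta_C. eta_norm. unfold pd2. field. }
assert (e2 : Derive (Fg_eta_CD xm ym Fl unBC unCD g) 1 = Fg_xieta_C xm ym unBC unCD g).
{ apply is_derive_unique. rewrite FE. unfold rho0d, ups0d, ups1d, omg1d, phi0, phi1. auto_derive.
  - side. apply exd_TCD; auto. apply exd_SCD'; auto.
  - unfold Fg_xieta_C. eta_norm.
    destruct (Req_dec (dotJ xm ym 1 1) 0) as [e|e].
    + assert (L : lamC xm ym = 0) by (unfold lamC, flag; destruct Req_dec_T; [reflexivity|contradiction]).
      assert (S1 : S_CD xm ym 1 = 0) by (rewrite S_CD_eq by auto; rewrite e; unfold Rdiv; ring).
      assert (S2 : S_BC xm ym 1 = 0) by (unfold S_BC; rewrite e; unfold Rdiv; ring).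
      assert (HC := HcompC L).
      assert (HC' : Derive (T_CD xm ym unCD) 1 = Derive (T_BC xm ym unBC) 1 - Derive (S_BC xm ym) 1 * FaEta_C xm ym unBC unCD + Derive (S_CD xm ym) 1 * FaXi_C xm ym unBC unCD) by lra.
      rewrite L, S1, S2, HC'. field.
    + assert (L : lamC xm ym = 1) by (unfold lamC, flag; destruct Req_dec_T; [contradiction|reflexivity]).
      assert (S : S_CD xm ym 1 <> 0).
      { rewrite S_CD_eq by auto. pose proof (nxi2_pos xm ym 1 1 HJ11).
        unfold Rdiv. apply Rmult_integral_contrapositive_currified; [lra| apply Rinv_neq_0_compat; lra]. }
      rewrite L. unfold Fg_xixi_C, R_C. unfold pd1. field. auto. }
split.
{ intros eta Heta. unfold V, Pg, PFg. rewrite eA1, eA2, Hcorner.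
  unfold rho0, rho1, ups0, ups1, omg1, phi0, phi1. split; field. }
split.
{ intros eta Heta.
  evar (l1 : R).
  assert (D1 : is_derive (fun s => V xm ym Fl Fb unBC unCD g s eta) 1 l1).
  { unfold V, Pg, PFg, rho0, rho1, ups0, ups1, omg1, phi0, phi1. auto_derive.
    - side2.
    - unfold l1; reflexivity. }
  evar (l2 : R).
  assert (D2 : is_derive (fun t => V xm ym Fl Fb unBC unCD g 1 t) eta l2).
  { unfold V, Pg, PFg, rho0, rho1, ups0, ups1, omg1, phi0, phi1. auto_derive.
    - side2.
    - unfold l2; reflexivity. }
  split; [exists l1; exact D1|]. split; [exists l2; exact D2|].
  assert (E1 : pd1 (V xm ym Fl Fb unBC unCD g) 1 eta = l1) by (apply is_derive_unique; exact D1).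
  assert (E2 : pd2 (V xm ym Fl Fb unBC unCD g) 1 eta = l2) by (apply is_derive_unique; exact D2).
  rewrite E1, E2. unfold l1, l2.
  eta_norm. rewrite e1, e2, Hsw, FB. cbv beta.
  unfold rho0d, ups0d, ups1d, phi0, phi1. unfold pd1, pd2. eta_norm. field. }
{ intros xi Hxi.
  evar (l1 : R).
  assert (D1 : is_derive (fun t => V xm ym Fl Fb unBC unCD g xi t) 1 l1).
  { unfold V, Pg, PFg, rho0, rho1, ups0, ups1, omg1, phi0, phi1. auto_derive.
    - side2.
    - unfold l1; reflexivity. }
  evar (l2 : R).
  assert (D2 : is_derive (fun s => V xm ym Fl Fb unBC unCD g s 1) xi l2).
  { unfold V, Pg, PFg, rho0, rho1, ups0, ups1, omg1, phi0, phi1. auto_derive.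
    - side2.
    - unfold l2; reflexivity. }
  split; [exists l1; exact D1|]. split; [exists l2; exact D2|].
  assert (E1 : pd2 (V xm ym Fl Fb unBC unCD g) xi 1 = l1) by (apply is_derive_unique; exact D1).
  assert (E2 : pd1 (V xm ym Fl Fb unBC unCD g) xi 1 = l2) by (apply is_derive_unique; exact D2).
  rewrite E1, E2. unfold l1, l2.
  eta_norm. rewrite e1', e2', FE. cbv beta.
  unfold rho0d, ups0d, ups1d, omg1d, phi0, phi1. unfold pd1, pd2. eta_norm. field. }
Qed.
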